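(* Let $X\subseteq\bar{X}$ and $Y\subseteq\bar{Y}$ be convex closures of Boolean metric spaces $X,Y$ over a Boolean ring $B$. Every contractive map $f:X\to Y$ extends to a unique contractive map $\bar{f}:\bar{X}\to\bar{Y}$. Furthermore: (1) $\bar{f}$ is an immersion if and only if $f$ is an immersion, and if $f$ is an isometry then so is $\bar f$; (2) for contractive maps $f:X\to Y$ and $g:Y\to Z$, where $Z\subseteq \bar Z$ is a convex closure, $\overline{g\circ f}=\bar{g}\circ\bar{f}$. In particular, any two convex closures of $X$ are isometric via an isometry restricting to the identity on $X$.
   Context: $B$ is a Boolean ring ($a\vee b=a+b+ab$, $a\le b\iff ab=a$; $a_1\oplus\cdots\oplus a_n$ denotes a sum of pairwise disjoint elements). A Boolean metric space over $B$: set $X$ with $d:X\times X\to B$, $d(x,y)=0\iff x=y$, symmetric, $d(x,z)\le d(x,y)\vee d(y,z)$. For $x_1,\dots,x_n\in X$, $a_i\in B$ with $a_1\oplus\cdots\oplus a_n=1$, $x$ is a convex combination of the $x_i$ with coefficients $a_i$ if $a_id(x,x_i)=0$ for all $i$; $X$ is convex if all such combinations exist. A convex closure of $X$ is a convex metric space $\bar X\supseteq X$ whose metric restricts to that of $X$ and in which every element is a convex combination of elements of $X$. A map $f$ is contractive if $d(f(x),f(y))\le d(x,y)$, an immersion if equality holds, and an isometry if it is a bijective immersion. *)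

(* Defs.v *)
From HB Require Import structures.
From mathcomp Require Import all_boot all_order all_algebra.
Set Implicit Arguments. Unset Strict Implicit. Unset Printing Implicit Defensive.
Import GRing.Theory.
Local Open Scope ring_scope.

Definition boolean_ring (B : comPzRingType) : Prop := forall a : B, a * a = a.

Definition bjoin (B : comPzRingType) (a b : B) : B := a + b + a * b.
Definition ble (B : comPzRingType) (a b : B) : Prop := a * b = a.

Definition bmetric (B : comPzRingType) (X : Type) (d : X -> X -> B) : Prop :=
  [/\ (forall x y, d x y = 0 <-> x = y),
      (forall x y, d x y = d y x) &
      (forall x y z, ble (d x z) (bjoin (d x y) (d y z)))].

Definition disjoint_partition (B : comPzRingType) (n : nat) (a : 'I_n -> B) : Prop :=
  (forall i j : 'I_n, i != j -> a i * a j = 0) /\ \sum_(i < n) a i = 1.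

Definition convex_comb (B : comPzRingType) (X : Type) (d : X -> X -> B)
  (n : nat) (xs : 'I_n -> X) (a : 'I_n -> B) (p : X) : Prop :=
  forall i : 'I_n, a i * d p (xs i) = 0.

Definition bconvex (B : comPzRingType) (X : Type) (d : X -> X -> B) : Prop :=
  forall (n : nat) (xs : 'I_n -> X) (a : 'I_n -> B),
    disjoint_partition a -> exists p : X, convex_comb d xs a p.

Definition convex_closure (B : comPzRingType) (X Xb : Type)
  (d : X -> X -> B) (db : Xb -> Xb -> B) (iX : X -> Xb) : Prop :=
  [/\ bmetric db, bconvex db,
      (forall x y : X, db (iX x) (iX y) = d x y) &
      (forall p : Xb, exists (n : nat) (xs : 'I_n -> X) (a : 'I_n -> B),
          disjoint_partition a /\ convex_comb db (fun i => iX (xs i)) a p)].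

Definition bcontractive (B : comPzRingType) (X Y : Type)
  (dX : X -> X -> B) (dY : Y -> Y -> B) (f : X -> Y) : Prop :=
  forall x y, ble (dY (f x) (f y)) (dX x y).

Definition bimmersion (B : comPzRingType) (X Y : Type)
  (dX : X -> X -> B) (dY : Y -> Y -> B) (f : X -> Y) : Prop :=
  forall x y, dY (f x) (f y) = dX x y.

Definition bisometry (B : comPzRingType) (X Y : Type)
  (dX : X -> X -> B) (dY : Y -> Y -> B) (f : X -> Y) : Prop :=
  bimmersion dX dY f /\ bijective f.

Definition contr_extension (B : comPzRingType) (X Y Xb Yb : Type)
  (dXb : Xb -> Xb -> B) (dYb : Yb -> Yb -> B) (iX : X -> Xb) (iY : Y -> Yb)
  (f : X -> Y) (fb : Xb -> Yb) : Prop :=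
  bcontractive dXb dYb fb /\ (forall x : X, fb (iX x) = iY (f x)).

(* Main.v *)
Require Import Defs.
From HB Require Import structures.
From mathcomp Require Import all_boot all_order all_algebra.
From Stdlib Require Import ClassicalEpsilon FunctionalExtensionality.
Set Implicit Arguments. Unset Strict Implicit. Unset Printing Implicit Defensive.
Import GRing.Theory.
Local Open Scope ring_scope.

Lemma join_l (B : comPzRingType) (c e s t : B) :
  c * e = 0 -> ble s (bjoin e t) -> c * s * t = c * s.
Proof.
rewrite /ble /bjoin => ce hs.
have E : c * s = c * s * e + c * s * t + c * s * e * t by rewrite -{1}hs !mulrDr !mulrA.
have Z : c * s * e = 0 by rewrite mulrAC ce mul0r.
by rewrite {2}E Z mul0r add0r addr0.
Qed.

Lemma join_r (B : comPzRingType) (c e s t : B) :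
  c * e = 0 -> ble s (bjoin t e) -> c * s * t = c * s.
Proof.
rewrite /ble /bjoin => ce hs.
have E : c * s = c * s * t + c * s * e + c * s * t * e by rewrite -{1}hs !mulrDr !mulrA.
have Z : c * s * e = 0 by rewrite mulrAC ce mul0r.
by rewrite {2}E Z (mulrAC _ t) Z mul0r !addr0.
Qed.

Lemma half (B : comPzRingType) (M : Type) (d : M -> M -> B) (hd : bmetric d)
  (c : B) u v x y : c * d u x = 0 -> c * d v y = 0 -> c * d u v * d x y = c * d u v.
Proof.
case: hd => _ hs ht h1 h2.
have t1 : c * d u v * d x v = c * d u v by apply: (join_l h1 (ht u x v)).
have h2' : c * d y v = 0 by rewrite hs.
have t2 : c * d x v * d x y = c * d x v by apply: (join_r h2' (ht x y v)).
have R : forall w, c * d u v * w * d x y = d u v * (c * w * d x y).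
  by move=> w; rewrite !mulrA (mulrC (d u v) c).
rewrite -{1}t1 R t2.
by rewrite mulrA (mulrC (d u v) c).
Qed.

Lemma key (B : comPzRingType) (M : Type) (d : M -> M -> B) (hd : bmetric d)
  (c : B) u v x y : c * d u x = 0 -> c * d v y = 0 -> c * d u v = c * d x y.
Proof.
move=> h1 h2.
have hs : forall a b, d a b = d b a by case: hd.
have e1 := half hd h1 h2.
have h1' : c * d x u = 0 by rewrite hs.
have h2' : c * d y v = 0 by rewrite hs.
have e2 := half hd h1' h2'.
by rewrite -e1 -e2 mulrAC.
Qed.

Lemma sum_eq (B : comPzRingType) n m (a : 'I_n -> B) (b : 'I_m -> B) (u v : B) :
  \sum_(i < n) a i = 1 -> \sum_(j < m) b j = 1 ->
  (forall i j, a i * b j * u = a i * b j * v) -> u = v.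
Proof.
move=> ha hb h.
have E : forall w, w = \sum_(i < n) \sum_(j < m) a i * b j * w.
  move=> w; rewrite -{1}[w]mul1r -{1}ha big_distrl /=; apply: eq_bigr => i _.
  by rewrite -{1}[w]mul1r -{1}hb big_distrl big_distrr /=; apply: eq_bigr => j _; rewrite mulrA.
rewrite (E u) (E v); apply: eq_bigr => i _; apply: eq_bigr => j _; exact: h.
Qed.

Lemma sum_le (B : comPzRingType) (hB : boolean_ring B) n m (a : 'I_n -> B) (b : 'I_m -> B) (u v : B) :
  \sum_(i < n) a i = 1 -> \sum_(j < m) b j = 1 ->
  (forall i j, ble (a i * b j * u) (a i * b j * v)) -> ble u v.
Proof.
move=> ha hb h; rewrite /ble; apply: (sum_eq ha hb) => i j.
have := h i j; rewrite /ble => <-.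
move: (a i * b j) => c.
by rewrite -mulrA (mulrCA u c) !mulrA (hB c).
Qed.

Lemma ble_mul (B : comPzRingType) (hB : boolean_ring B) (c s t : B) : ble s t -> ble (c * s) (c * t).
Proof. rewrite /ble => h; by rewrite -mulrA (mulrCA s) h mulrA (hB c). Qed.

Lemma sum_zero (B : comPzRingType) n (a : 'I_n -> B) (u : B) :
  \sum_(i < n) a i = 1 -> (forall i, a i * u = 0) -> u = 0.
Proof.
move=> ha h; rewrite -[u]mul1r -ha big_distrl /=; apply: big1 => i _; exact: h.
Qed.

Lemma comb_uniq (B : comPzRingType) (M : Type) (d : M -> M -> B) (hd : bmetric d)
  n (zs : 'I_n -> M) a p q : \sum_(i < n) a i = 1 ->
  convex_comb d zs a p -> convex_comb d zs a q -> p = q.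
Proof.
move=> ha hp hq; have [h0 _ _] := hd; apply: (proj1 (h0 p q)).
apply: (sum_zero ha) => i; rewrite (key hd (hp i) (hq i)) (proj2 (h0 _ _) erefl); exact: mulr0.
Qed.

Lemma cross (B : comPzRingType) (X Xb Y Yb : Type) (dX : X -> X -> B) (dXb : Xb -> Xb -> B)
  (dY : Y -> Y -> B) (dYb : Yb -> Yb -> B) (iX : X -> Xb) (iY : Y -> Yb)
  (hmX : bmetric dXb) (hmY : bmetric dYb)
  (eX : forall x y, dXb (iX x) (iX y) = dX x y) (eY : forall x y, dYb (iY x) (iY y) = dY x y)
  (f : X -> Y) n m (xs : 'I_n -> X) (ys : 'I_m -> X) a b p q p' q' :
  convex_comb dXb (fun i => iX (xs i)) a p -> convex_comb dXb (fun j => iX (ys j)) b q ->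
  convex_comb dYb (fun i => iY (f (xs i))) a p' -> convex_comb dYb (fun j => iY (f (ys j))) b q' ->
  (forall i j, a i * b j * dYb p' q' = a i * b j * dY (f (xs i)) (f (ys j))) /\
  (forall i j, a i * b j * dXb p q = a i * b j * dX (xs i) (ys j)).
Proof.
move=> hp hq hp' hq'; split=> i j.
  rewrite -eY; apply: key => //.
    by rewrite mulrAC (hp' i) mul0r.
  by rewrite -mulrA (hq' j) mulr0.
rewrite -eX; apply: key => //.
  by rewrite mulrAC (hp i) mul0r.
by rewrite -mulrA (hq j) mulr0.
Qed.

Definition Rrep (B : comPzRingType) (X Xb Y Yb : Type) (dXb : Xb -> Xb -> B)
  (dYb : Yb -> Yb -> B) (iX : X -> Xb) (iY : Y -> Yb) (f : X -> Y) (p : Xb) (p' : Yb) :=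
  exists n (xs : 'I_n -> X) (a : 'I_n -> B), \sum_(i < n) a i = 1 /\
    convex_comb dXb (fun i => iX (xs i)) a p /\ convex_comb dYb (fun i => iY (f (xs i))) a p'.

Lemma rep_contr (B : comPzRingType) (hB : boolean_ring B) (X Xb Y Yb : Type) (dX : X -> X -> B) (dXb : Xb -> Xb -> B)
  (dY : Y -> Y -> B) (dYb : Yb -> Yb -> B) (iX : X -> Xb) (iY : Y -> Yb)
  (hmX : bmetric dXb) (hmY : bmetric dYb)
  (eX : forall x y, dXb (iX x) (iX y) = dX x y) (eY : forall x y, dYb (iY x) (iY y) = dY x y)
  (f : X -> Y) p q p' q' :
  Rrep dXb dYb iX iY f p p' -> Rrep dXb dYb iX iY f q q' ->
  (bcontractive dX dY f -> ble (dYb p' q') (dXb p q)) /\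
  (bimmersion dX dY f -> dYb p' q' = dXb p q).
Proof.
move=> [n [xs [a [ha [hp hp']]]]] [m [ys [b [hb [hq hq']]]]].
have [E1 E2] := cross hmX hmY eX eY hp hq hp' hq'.
split=> hf.
  apply: (sum_le hB ha hb) => i j; rewrite E1 E2; exact: ble_mul.
apply: (sum_eq ha hb) => i j; by rewrite E1 E2 hf.
Qed.

Lemma ext_rep (B : comPzRingType) (X Xb Y Yb : Type) (dXb : Xb -> Xb -> B)
  (dYb : Yb -> Yb -> B) (iX : X -> Xb) (iY : Y -> Yb)
  (f : X -> Y) (g : Xb -> Yb) n (xs : 'I_n -> X) a p :
  contr_extension dXb dYb iX iY f g -> convex_comb dXb (fun i => iX (xs i)) a p ->
  convex_comb dYb (fun i => iY (f (xs i))) a (g p).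
Proof.
move=> [gc ge] hp i; rewrite -ge.
have := gc p (iX (xs i)); rewrite /ble => E.
by rewrite -E mulrCA (hp i) mulr0.
Qed.

Lemma ext_Rrep (B : comPzRingType) (X Xb Y Yb : Type) (dX : X -> X -> B) (dXb : Xb -> Xb -> B)
  (dYb : Yb -> Yb -> B) (iX : X -> Xb) (iY : Y -> Yb)
  (hXb : convex_closure dX dXb iX)
  (f : X -> Y) (g : Xb -> Yb) :
  contr_extension dXb dYb iX iY f g -> forall p, Rrep dXb dYb iX iY f p (g p).
Proof.
move=> hg p; case: hXb => _ _ _ hr.
have [n [xs [a [[_ ha] hp]]]] := hr p.
exists n, xs, a; split=> //; split=> //; exact: ext_rep hg hp.
Qed.

Lemma ext_unique (B : comPzRingType) (X Xb Y Yb : Type) (dX : X -> X -> B) (dXb : Xb -> Xb -> B)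
  (dYb : Yb -> Yb -> B) (iX : X -> Xb) (iY : Y -> Yb)
  (hXb : convex_closure dX dXb iX) (hmY : bmetric dYb)
  (f : X -> Y) (g1 g2 : Xb -> Yb) :
  contr_extension dXb dYb iX iY f g1 -> contr_extension dXb dYb iX iY f g2 ->
  forall p, g1 p = g2 p.
Proof.
move=> h1 h2 p; case: hXb => _ _ _ hr.
have [n [xs [a [[_ ha] hp]]]] := hr p.
exact: (comb_uniq hmY ha (ext_rep h1 hp) (ext_rep h2 hp)).
Qed.

Lemma ext_exists (B : comPzRingType) (hB : boolean_ring B) (X Xb Y Yb : Type) (dX : X -> X -> B) (dXb : Xb -> Xb -> B)
  (dY : Y -> Y -> B) (dYb : Yb -> Yb -> B) (iX : X -> Xb) (iY : Y -> Yb)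
  (hXb : convex_closure dX dXb iX) (hYb : convex_closure dY dYb iY)
  (f : X -> Y) : bcontractive dX dY f ->
  exists fb, contr_extension dXb dYb iX iY f fb.
Proof.
move=> hf.
case: (hXb) => hmX _ eX hr; case: (hYb) => hmY cvY eY _.
have ex : forall p, exists q, Rrep dXb dYb iX iY f p q.
  move=> p; have [n [xs [a [pa hp]]]] := hr p.
  have [q hq] := cvY n (fun i => iY (f (xs i))) a pa.
  exists q, n, xs, a; split; [exact: pa.2 | by split].
pose fb p := proj1_sig (constructive_indefinite_description _ (ex p)).
have Hfb : forall p, Rrep dXb dYb iX iY f p (fb p).
  move=> p; exact: (proj2_sig (constructive_indefinite_description _ (ex p))).
exists fb; split.
  move=> p q; exact: ((rep_contr hB hmX hmY eX eY (Hfb p) (Hfb q)).1 hf).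
move=> x.
have [h0 _ _] := hmX; have [h0' _ _] := hmY.
have R1 : Rrep dXb dYb iX iY f (iX x) (iY (f x)).
  exists 1%N, (fun _ => x), (fun _ => 1); split; first by rewrite big_ord1.
  split=> i; rewrite mul1r; [exact: (proj2 (h0 _ _) erefl) | exact: (proj2 (h0' _ _) erefl)].
have := (rep_contr hB hmX hmY eX eY (Hfb (iX x)) R1).1 hf.
rewrite /ble (proj2 (h0 _ _) erefl) mulr0 => E.
by apply: (proj1 (h0' _ _)); rewrite -E.
Qed.

Lemma ble_trans (B : comPzRingType) (s t u : B) : ble s t -> ble t u -> ble s u.
Proof. rewrite /ble => h1 h2; by rewrite -h1 -mulrA h2. Qed.

Lemma ext_imm (B : comPzRingType) (hB : boolean_ring B) (X Xb Y Yb : Type) (dX : X -> X -> B) (dXb : Xb -> Xb -> B)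
  (dY : Y -> Y -> B) (dYb : Yb -> Yb -> B) (iX : X -> Xb) (iY : Y -> Yb)
  (hXb : convex_closure dX dXb iX) (hYb : convex_closure dY dYb iY)
  (f : X -> Y) (fb : Xb -> Yb) :
  contr_extension dXb dYb iX iY f fb -> bimmersion dX dY f -> bimmersion dXb dYb fb.
Proof.
case: (hXb) => hmX cvX eX hrX; case: (hYb) => hmY cvY eY hrY.
move=> hfb hf p q.
exact: ((rep_contr hB hmX hmY eX eY (ext_Rrep hXb hfb p) (ext_Rrep hXb hfb q)).2 hf).
Qed.

Lemma ext_iso (B : comPzRingType) (hB : boolean_ring B) (X Xb Y Yb : Type) (dX : X -> X -> B) (dXb : Xb -> Xb -> B)
  (dY : Y -> Y -> B) (dYb : Yb -> Yb -> B) (iX : X -> Xb) (iY : Y -> Yb)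
  (hXb : convex_closure dX dXb iX) (hYb : convex_closure dY dYb iY)
  (f : X -> Y) (fb : Xb -> Yb) :
  contr_extension dXb dYb iX iY f fb -> bisometry dX dY f -> bisometry dXb dYb fb.
Proof.
move=> hfb [hf_imm [g gK Kg]].
have imm := ext_imm hB hXb hYb hfb hf_imm.
case: (hXb) => hmX cvX eX hrX; case: (hYb) => hmY cvY eY hrY.
have [h0 _ _] := hmX; have [h0' _ _] := hmY.
split => //.
have inj : injective fb.
  move=> p q E; apply: (proj1 (h0 p q)); rewrite -imm E; exact: (proj2 (h0' _ _) erefl).
have surj : forall q, exists p, fb p = q.
  move=> q; have [m [ys [b [hb hq]]]] := hrY q.
  have [p hp] := cvX m (fun j => iX (g (ys j))) b hb.
  exists p; apply: (comb_uniq hmY hb.2 _ hq) => j.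
  have := ext_rep (xs := fun j => g (ys j)) hfb hp j; by rewrite /= Kg.
pose h q := proj1_sig (constructive_indefinite_description _ (surj q)).
have hK : forall q, fb (h q) = q.
  move=> q; exact: (proj2_sig (constructive_indefinite_description _ (surj q))).
exists h; [move=> p; apply: inj; by rewrite hK | exact: hK].
Qed.

Theorem mainTheorem15 (B : comPzRingType) (hB : boolean_ring B)
  (X Xb Y Yb : Type) (dX : X -> X -> B) (dXb : Xb -> Xb -> B)
  (dY : Y -> Y -> B) (dYb : Yb -> Yb -> B) (iX : X -> Xb) (iY : Y -> Yb)
  (hX : bmetric dX) (hY : bmetric dY)
  (hXb : convex_closure dX dXb iX) (hYb : convex_closure dY dYb iY) :
  (* existence and uniqueness of the bcontractive extension *)
  (forall f : X -> Y, bcontractive dX dY f ->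
     exists! fb : Xb -> Yb, contr_extension dXb dYb iX iY f fb)
  /\
  (* (1) immersions and isometries *)
  (forall (f : X -> Y) (fb : Xb -> Yb), bcontractive dX dY f ->
     contr_extension dXb dYb iX iY f fb ->
     (bimmersion dXb dYb fb <-> bimmersion dX dY f) /\
     (bisometry dX dY f -> bisometry dXb dYb fb))
  /\
  (* (2) functoriality: the extension of g \o f is gb \o fb *)
  (forall (Z Zb : Type) (dZ : Z -> Z -> B) (dZb : Zb -> Zb -> B) (iZ : Z -> Zb),
     bmetric dZ -> convex_closure dZ dZb iZ ->
     forall (f : X -> Y) (g : Y -> Z) (fb : Xb -> Yb) (gb : Yb -> Zb)
            (hb : Xb -> Zb),
     bcontractive dX dY f -> bcontractive dY dZ g ->
     contr_extension dXb dYb iX iY f fb ->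
     contr_extension dYb dZb iY iZ g gb ->
     contr_extension dXb dZb iX iZ (fun x => g (f x)) hb ->
     forall p : Xb, hb p = gb (fb p))
  /\
  (* any two convex closures of X are isometric over X *)
  (forall (Xb' : Type) (dXb' : Xb' -> Xb' -> B) (iX' : X -> Xb'),
     convex_closure dX dXb' iX' ->
     exists h : Xb -> Xb', bisometry dXb dXb' h /\ (forall x : X, h (iX x) = iX' x)).
Proof.
case: (hXb) => hmX cvX eX hrX; case: (hYb) => hmY cvY eY hrY.
split.
  move=> f hf; have [fb hfb] := ext_exists hB hXb hYb hf; exists fb; split=> // g hg.
  apply: functional_extensionality => p; exact: (ext_unique hXb hmY hfb hg p).
split.
  move=> f fb hf hfb; split; last exact: ext_iso.
  split; last exact: ext_imm.
  move=> him x y; by rewrite -eY -!(proj2 hfb) him eX.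
split.
  move=> Z Zb dZ dZb iZ hZ hZb f g fb gb hb hf hg hfb hgb hhb p.
  case: (hZb) => hmZ _ _ _.
  apply: (ext_unique (g2 := fun q => gb (fb q)) hXb hmZ hhb); split.
    move=> p1 p2; exact: (ble_trans (proj1 hgb (fb p1) (fb p2)) (proj1 hfb p1 p2)).
  by move=> x; rewrite /= (proj2 hfb) (proj2 hgb).
move=> Xb' dXb' iX' hXb'.
have idc : bcontractive dX dX id by move=> x y; rewrite /ble hB.
have [h hh] := ext_exists hB hXb hXb' idc.
exists h; split; last exact: hh.2.
apply: (ext_iso hB hXb hXb' hh); split; first by [].
exists id => //.
Qed.
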